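(* Let $A$ be a set with a ternary operation $p\colon A^3\to A$ and two constants $0,1\in A$ satisfying, for all $a,b,c,b_1,b_2,b_3\in A$: (T1) $p(0,a,1)=a$; (T2) $p(a,b,a)=a$; (T3) $p(a,p(b_1,b_2,b_3),c)=p(p(a,b_1,c),b_2,p(a,b_3,c))$; (T4) $p(a,0,b)=a=p(b,1,a)$. Define $\bar{a}=p(1,a,0)$, $a\cdot b=p(0,a,b)$ and $a+b=p(a,b,\bar a)$. Then the following conditions are equivalent: (i) $(A,+,\cdot,0,1)$ is a unitary (right) near-ring of characteristic $2$; (ii) $p(a,b,c)=a+(b\cdot(a+c))$ for all $a,b,c\in A$; (iii) $a+a=0$ for all $a\in A$; (iv) $(a+b)\cdot c=(a\cdot c)+(b\cdot c)$ for all $a,b,c\in A$.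
   Context: A unitary (right) near-ring $(A,+,\cdot,0,1)$ is a set $A$ with binary operations $+$ and $\cdot$ such that $(A,+,0)$ is a group (not assumed abelian a priori), $(A,\cdot,1)$ is a monoid, and the right distributive law $(a+b)\cdot c=a\cdot c+b\cdot c$ holds for all $a,b,c$. It has characteristic $2$ if $b+b=0$ for all $b\in A$. *)

(* Defs.v *)
Section Defs.
Context {A : Type}.

Definition ternary_axioms (p : A -> A -> A -> A) (zero one : A) : Prop :=
  (forall a, p zero a one = a) /\
  (forall a b, p a b a = a) /\
  (forall a b1 b2 b3 c,
      p a (p b1 b2 b3) c = p (p a b1 c) b2 (p a b3 c)) /\
  (forall a b, p a zero b = a /\ p b one a = a).

Definition tbar (p : A -> A -> A -> A) (zero one : A) (a : A) : A := p one a zero.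
Definition tmul (p : A -> A -> A -> A) (zero : A) (a b : A) : A := p zero a b.
Definition tadd (p : A -> A -> A -> A) (zero one : A) (a b : A) : A :=
  p a b (tbar p zero one a).

Definition is_group (add : A -> A -> A) (zero : A) : Prop :=
  (forall a b c, add a (add b c) = add (add a b) c) /\
  (forall a, add zero a = a /\ add a zero = a) /\
  (forall a, exists b, add a b = zero /\ add b a = zero).

Definition is_monoid (mul : A -> A -> A) (one : A) : Prop :=
  (forall a b c, mul a (mul b c) = mul (mul a b) c) /\
  (forall a, mul one a = a /\ mul a one = a).

Definition unitary_right_near_ring (add mul : A -> A -> A) (zero one : A) : Prop :=
  is_group add zero /\ is_monoid mul one /\
  (forall a b c, mul (add a b) c = add (mul a c) (mul b c)).

Definition char2 (add : A -> A -> A) (zero : A) : Prop :=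
  forall b, add b b = zero.

End Defs.

(* Main.v *)
Require Import Defs.
From Stdlib Require Import Setoid.

Section S.
Variables (A : Type) (p : A -> A -> A -> A) (zero one : A).
Hypothesis Hp : ternary_axioms p zero one.

Let T1 : forall a, p zero a one = a. Proof. apply Hp. Qed.
Let T2 : forall a b, p a b a = a. Proof. apply Hp. Qed.
Let T3 : forall a b1 b2 b3 c, p a (p b1 b2 b3) c = p (p a b1 c) b2 (p a b3 c).
Proof. apply Hp. Qed.
Let T4a : forall a b, p a zero b = a. Proof. apply Hp. Qed.
Let T4b : forall a b, p b one a = a. Proof. apply Hp. Qed.

Notation bar := (tbar p zero one).
Notation add := (tadd p zero one).
Notation mul := (tmul p zero).

Lemma bar0 : bar zero = one. Proof. unfold tbar. apply T4a. Qed.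
Lemma bar1 : bar one = zero. Proof. unfold tbar. apply T4b. Qed.
Lemma barbar x : bar (bar x) = x.
Proof. unfold tbar. rewrite T3, T4b, T4a. apply T1. Qed.
Lemma symS a b c : p c (bar b) a = p a b c.
Proof. unfold tbar. rewrite T3, T4b, T4a. reflexivity. Qed.
Lemma bar_add x y : bar (add x y) = add x (bar y).
Proof.
  unfold tadd at 1. unfold tbar at 1. rewrite T3.
  change (p (bar x) y (bar (bar x)) = add x (bar y)).
  rewrite barbar. unfold tadd. rewrite symS. reflexivity.
Qed.
Lemma add_assoc x y z : add x (add y z) = add (add x y) z.
Proof.
  unfold tadd at 1 2. rewrite T3.
  change (p (add x y) z (add x (bar y)) = add (add x y) z).
  rewrite <- bar_add. reflexivity.
Qed.
Lemma add0r a : add zero a = a.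
Proof. unfold tadd. rewrite bar0. apply T1. Qed.
Lemma addr0 a : add a zero = a.
Proof. unfold tadd. apply T4a. Qed.
Lemma mul_assoc a b c : mul a (mul b c) = mul (mul a b) c.
Proof. unfold tmul. rewrite T3, T4a. reflexivity. Qed.
Lemma mul1r a : mul one a = a. Proof. unfold tmul. apply T4b. Qed.
Lemma mulr1 a : mul a one = a. Proof. unfold tmul. apply T1. Qed.
Lemma mul0r a : mul zero a = zero. Proof. unfold tmul. apply T4a. Qed.
Lemma lemM a b x c : p a (mul b x) c = p a b (p a x c).
Proof. unfold tmul. rewrite T3, T4a. reflexivity. Qed.

Lemma iii_ii : (forall a, add a a = zero) ->
  forall a b c, p a b c = add a (mul b (add a c)).
Proof.
  intros H a b c. unfold tadd at 1. rewrite lemM.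
  change (p a b c = p a b (add a (add a c))).
  rewrite add_assoc, H, add0r. reflexivity.
Qed.

Lemma ii_iii : (forall a b c, p a b c = add a (mul b (add a c))) ->
  forall a, add a a = zero.
Proof.
  intros H a. transitivity (add a (mul one (add a zero))).
  - rewrite mul1r, addr0. reflexivity.
  - rewrite <- H. apply T4b.
Qed.

Lemma comm : (forall a, add a a = zero) -> forall x y, add x y = add y x.
Proof.
  intros H x y.
  assert (E : add x (add (add (add x y) (add x y)) y) = add y x).
  { rewrite !add_assoc, H, add0r. rewrite <- (add_assoc (add y x) y y), H, addr0.
    reflexivity. }
  rewrite H, add0r in E. exact E.
Qed.

Lemma iii_iv : (forall a, add a a = zero) ->
  forall a b c, mul (add a b) c = add (mul a c) (mul b c).
Proof.
  intros H a b c.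
  assert (E1 : mul (add a b) c = p (mul a c) b (p c a zero)).
  { unfold tadd, tmul, tbar. rewrite T3. rewrite (T3 zero one a zero c).
    rewrite T4b, T4a. reflexivity. }
  assert (E2 : add (mul a c) (mul b c) = p (mul a c) b (add (mul a c) c)).
  { unfold tadd at 1. rewrite lemM. reflexivity. }
  rewrite E1, E2. f_equal.
  rewrite (iii_ii H), addr0, comm by exact H. reflexivity.
Qed.

Lemma iv_iii : (forall a b c, mul (add a b) c = add (mul a c) (mul b c)) ->
  forall a, add a a = zero.
Proof.
  intros H a. rewrite <- (mul1r a), <- H.
  assert (E : add one one = zero).
  { unfold tadd. rewrite T4b. apply bar1. }
  rewrite E. apply mul0r.
Qed.

End S.

Theorem theorem3 (A : Type) (p : A -> A -> A -> A) (zero one : A)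
  (Hp : ternary_axioms p zero one) :
  let add := tadd p zero one in
  let mul := tmul p zero in
  (* (i) *) (unitary_right_near_ring add mul zero one /\ char2 add zero
  <-> (* (ii) *) (forall a b c, p a b c = add a (mul b (add a c)))) /\
  ((forall a b c, p a b c = add a (mul b (add a c)))
  <-> (* (iii) *) (forall a, add a a = zero)) /\
  ((forall a, add a a = zero)
  <-> (* (iv) *) (forall a b c, mul (add a b) c = add (mul a c) (mul b c))).
Proof.
  intros add mul. subst add mul.
  split; [|split].
  - split.
    + intros [_ H]. exact (iii_ii _ _ _ _ Hp H).
    + intros H. pose proof (ii_iii _ _ _ _ Hp H) as H3.
      split; [|exact H3].
      split; [|split].
      * split; [|split].
        -- intros; eapply add_assoc; exact Hp.
        -- intros a; split; [eapply add0r|eapply addr0]; exact Hp.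
        -- intros a; exists a; split; apply H3.
      * split.
        -- intros; eapply mul_assoc; exact Hp.
        -- intros a; split; [eapply mul1r|eapply mulr1]; exact Hp.
      * exact (iii_iv _ _ _ _ Hp H3).
  - split; [eapply ii_iii|eapply iii_ii]; exact Hp.
  - split; [eapply iii_iv|eapply iv_iii]; exact Hp.
Qed.
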